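(* Let $\mathbb{X}$ be a $0$-dimensional Polish space, $(C^\varepsilon_i)_{(\varepsilon,i)\in2\times\omega}$ a comparing $1$-disjoint family of subsets of $\mathbb{X}$, $X$ a Polish space and $A\subseteq X\times X$ any relation. Then one of the following holds: (a) there is $c:X\to\omega$ with all $c^{-1}(\{n\})\in\mathbf{\Delta}^0_2(X)$ and $c(x)\neq c(y)$ for all $(x,y)\in A$; (b) there is a continuous $f:\mathbb{X}\to X$ with $(f(x),f(y))\in A$ for all $(x,y)\in\bigcup_iC^0_i\times C^1_i$.
   Context: A family $(C^\varepsilon_i)_{(\varepsilon,i)\in2\times\omega}$ of subsets of $\mathbb{X}$ is $1$-disjoint if its members are closed and pairwise disjoint. It is comparing if for each $q\in\omega$ there is a partition $(O^p_q)_{p\in\omega}$ of $\mathbb{X}$ into clopen sets such that for each $i$: if $q<i$ there is $p$ with $C^0_i\cup C^1_i\subseteq O^p_q$; and if $q\ge i$ then $C^\varepsilon_i\subseteq O^{2i+\varepsilon}_q$ for each $\varepsilon\in2$. *)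

(* Defs.v *)
From HB Require Import structures.
From mathcomp Require Import all_boot all_order all_algebra.
From mathcomp Require Import all_classical all_reals all_analysis.
From mathcomp Require Import Rstruct Rstruct_topology borel_hierarchy.
Set Implicit Arguments. Unset Strict Implicit. Unset Printing Implicit Defensive.
Import Order.TTheory GRing.Theory Num.Theory.
Import numFieldNormedType.Exports.
Local Open Scope classical_set_scope.
Local Open Scope ring_scope.

Definition is_metric (T : Type) (d : T -> T -> Rdefinitions.R) : Prop :=
  [/\ forall x y, 0 <= d x y,
      forall x y, d x y = 0 <-> x = y,
      forall x y, d x y = d y x &
      forall x y z, d x z <= d x y + d y z].

Definition metric_compatible (T : topologicalType) (d : T -> T -> Rdefinitions.R) :=
  forall U : set T,
    open U <-> (forall x, U x -> exists2 e : Rdefinitions.R, 0 < e &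
                                  [set y | d x y < e] `<=` U).

Definition metric_complete (T : topologicalType) (d : T -> T -> Rdefinitions.R) :=
  forall u : nat -> T,
    (forall e : Rdefinitions.R, 0 < e ->
       exists N : nat, forall m n : nat, (N <= m)%N -> (N <= n)%N -> d (u m) (u n) < e) ->
    exists x : T, u @ \oo --> x.

Definition completely_metrizable (T : topologicalType) : Prop :=
  exists d : T -> T -> Rdefinitions.R,
    [/\ is_metric d, metric_compatible d & metric_complete d].

Definition separable_space (T : topologicalType) : Prop :=
  exists D : set T, countable D /\ dense D.

Definition polish (T : topologicalType) : Prop :=
  separable_space T /\ completely_metrizable T.

Definition zero_dim (T : topologicalType) : Prop :=
  forall (U : set T) (x : T), open U -> U x ->
    exists V : set T, [/\ clopen V, V x & V `<=` U].

Definition Delta02 (T : topologicalType) (S : set T) : Prop :=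
  Fsigma S /\ Gdelta S.

(* A family (C^eps_i) indexed by 2 x omega; eps = 0 is [false], eps = 1 is [true]. *)
Definition one_disjoint (T : topologicalType) (C : bool -> nat -> set T) : Prop :=
  (forall e i, closed (C e i)) /\
  (forall e i e' i', (e, i) <> (e', i') -> C e i `&` C e' i' = set0).

Definition clopen_partition (T : topologicalType) (O : nat -> set T) : Prop :=
  [/\ forall p, clopen (O p),
      forall p p', p <> p' -> O p `&` O p' = set0 &
      \bigcup_p O p = [set: T]].

Definition comparing (T : topologicalType) (C : bool -> nat -> set T) : Prop :=
  forall q : nat, exists O : nat -> set T,
    clopen_partition O /\
    forall i : nat,
      ((q < i)%N -> exists p, C false i `|` C true i `<=` O p) /\
      ((i <= q)%N -> forall e : bool, C e i `<=` O (2 * i + e)%N).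

(* Main.v *)
Require Import Defs.
From HB Require Import structures.
From mathcomp Require Import all_boot all_order all_algebra.
From mathcomp Require Import all_classical all_reals all_analysis.
From mathcomp Require Import Rstruct Rstruct_topology borel_hierarchy ring lra.

Import Order.TTheory GRing.Theory Num.Theory.
Local Open Scope classical_set_scope.
Local Open Scope ring_scope.

Set Implicit Arguments. Unset Strict Implicit.
Notation RR := Rdefinitions.R.

Definition rad (n : nat) : RR := (n.+1%:R)^-1.
Lemma rad_gt0 n : 0 < rad n.
Proof. by rewrite /rad invr_gt0 ltr0n. Qed.
Lemma archi_inv (e : RR) : 0 < e -> exists n : nat, rad n < e.
Proof.
move=> e0; exists (Num.truncn e^-1).
rewrite /rad invf_plt ?posrE ?ltr0n //.
exact: truncnS_gt.
Qed.

Lemma ball_open (X : topologicalType) (d : X -> X -> RR) x r :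
  is_metric d -> metric_compatible d -> open [set y | d x y < r].
Proof.
move=> [d0 dE dC dT] cd; apply/cd => y /= hy.
exists (r - d x y); first by rewrite subr_gt0.
move=> z /= hz; have := dT x y z; lra.
Qed.

Lemma metric_cvg (X : topologicalType) (d : X -> X -> RR) (u : nat -> X) l :
  is_metric d -> metric_compatible d -> u @ \oo --> l ->
  forall e, 0 < e -> exists N, forall n, (N <= n)%N -> d l (u n) < e.
Proof.
move=> md cd H e e0.
have /H : nbhs l [set y | d l y < e].
  apply: open_nbhs_nbhs; split; first exact: ball_open.
  by case: md => _ dE _ _; rewrite /= (proj2 (dE l l) erefl).
move=> [N _ HN]; exists N => n Nn; exact: HN.
Qed.

Lemma closed_Gdelta_m (X : topologicalType) (d : X -> X -> RR) (F : set X) :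
  is_metric d -> metric_compatible d -> closed F -> Gdelta F.
Proof.
move=> md cd cF.
have [d0 dE dC dT] := md.
exists (fun n : nat => [set x | exists y, F y /\ d y x < rad n]).
  move=> n; apply/cd => x [y [Fy hy]].
  exists (rad n - d y x); first by rewrite subr_gt0.
  move=> z /= hz; exists y; split => //; have := dT y x z; lra.
apply/seteqP; split.
  move=> x Fx n _; exists x; split => //; rewrite (proj2 (dE x x) erefl).
  exact: rad_gt0.
move=> x Hx; rewrite (closure_id F).1 //.
move=> B; rewrite nbhsE => -[B' [oB' B'x] B'B].
have [e e0 he] := (cd B').1 oB' x B'x.
have [n hn] := archi_inv e0.
have [y [Fy hy]] := Hx n I.
exists y; split => //; apply: B'B; apply: he => /=.
rewrite dC; lra.
Qed.

Lemma open_Fsigma_m (X : topologicalType) (d : X -> X -> RR) (U : set X) :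
  is_metric d -> metric_compatible d -> open U -> Fsigma U.
Proof.
move=> md cd oU.
have [G oG eG] := closed_Gdelta_m md cd (open_closedC oU).
exists (fun i => ~` G i); first by move=> i; apply: open_closedC.
by rewrite -setC_bigcap -eG setCK.
Qed.

Lemma Fsigma_closedI (X : topologicalType) (S F : set X) :
  Fsigma S -> closed F -> Fsigma (S `&` F).
Proof.
move=> [G cG ->] cF; exists (fun i => G i `&` F).
  by move=> i; apply: closedI.
apply/seteqP; split.
  by move=> x [[i _ Gx] Fx]; exists i.
by move=> x [i _ [Gx Fx]]; split => //; exists i.
Qed.

Lemma Gdelta_I (X : topologicalType) (S T : set X) :
  Gdelta S -> Gdelta T -> Gdelta (S `&` T).
Proof.
move=> [G oG ->] [H oH ->]; exists (fun i => G i `&` H i).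
  by move=> i; apply: openI.
apply/seteqP; split.
  by move=> x [h1 h2] i _; split; [apply: h1|apply: h2].
by move=> x h; split => i _; have [] := h i I.
Qed.

Lemma D02_closedI (X : topologicalType) (d : X -> X -> RR) (S F : set X) :
  is_metric d -> metric_compatible d ->
  Delta02 S -> closed F -> Delta02 (S `&` F).
Proof.
move=> md cd [h1 h2] cF; split; first exact: Fsigma_closedI.
by apply: Gdelta_I => //; apply: (closed_Gdelta_m md cd cF).
Qed.

Lemma D02_closed_open (X : topologicalType) (d : X -> X -> RR) (K B : set X) :
  is_metric d -> metric_compatible d ->
  closed K -> open B -> Delta02 (K `&` B).
Proof.
move=> md cd cK oB; split.
  by rewrite setIC; apply: Fsigma_closedI => //; apply: (open_Fsigma_m md cd oB).
apply: Gdelta_I; first exact: (closed_Gdelta_m md cd cK).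
exact: open_Gdelta.
Qed.

Lemma D02_set0 (X : topologicalType) : Delta02 (@set0 X).
Proof. split; [exact: closed_Fsigma closed0 | exact: open_Gdelta open0]. Qed.

Lemma least_ex (P : nat -> Prop) : (exists n, P n) ->
  exists n, P n /\ forall m, (m < n)%N -> ~ P m.
Proof.
move=> [n Pn].
suff : forall N n, (n <= N)%N -> P n -> exists n, P n /\ forall m, (m < n)%N -> ~ P m.
  by move/(_ n n (leqnn n) Pn).
elim=> [|N IH] {}n hn {}Pn.
  by exists n; split => // m; rewrite leqn0 in hn; rewrite (eqP hn).
have [[m [mn Pm]]|] := pselect (exists m, (m < n)%N /\ P m).
  apply: (IH m) => //; rewrite -ltnS; exact: leq_trans mn hn.
move=> hno; exists n; split => // m mn Pm; apply: hno; by exists m.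
Qed.

Definition good (X : topologicalType) (A : set (X * X)) (F : set X) :=
  closed F /\ exists c : X -> nat,
    (forall n, Delta02 ((c @^-1` [set n]) `\` F)) /\
    (forall x y, A (x, y) -> ~ F x -> ~ F y -> c x <> c y).

Lemma good_setT (X : topologicalType) (A : set (X * X)) : good A setT.
Proof.
split; first exact: closedT.
exists (fun _ => 0%N); split => [n|x y _ /(_ I)//].
have -> : (fun _ : X => 0%N) @^-1` [set n] `\` setT = set0.
  by apply/seteqP; split => [x [_ /(_ I)]|x] //.
exact: D02_set0.
Qed.

Lemma good_remove (X : topologicalType) (d : X -> X -> RR) (A : set (X * X)) K B :
  is_metric d -> metric_compatible d -> good A K -> open B ->
  (forall x y, K x -> K y -> B x -> B y -> ~ A (x, y)) -> good A (K `\` B).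
Proof.
move=> md cd [cK [c [hc hA]]] oB hKB; split.
  exact: closedI cK (open_closedC oB).
exists (fun x => if pselect (K x) is left _ then 0%N else (c x).+1); split.
  case=> [|m].
    have -> : (fun x => if pselect (K x) is left _ then 0%N else (c x).+1)
       @^-1` [set 0%N] `\` (K `\` B) = K `&` B.
      apply/seteqP; split => x /=.
        case: pselect => [Kx [_ h]|nK []/eqP//]; split => //.
        by apply: contrapT => nB; apply: h.
      move=> [Kx Bx]; case: pselect => [_|/(_ Kx)//]; by split => // -[_ /(_ Bx)].
    exact: (D02_closed_open md cd cK oB).
  have -> : (fun x => if pselect (K x) is left _ then 0%N else (c x).+1)
     @^-1` [set m.+1] `\` (K `\` B) = c @^-1` [set m] `\` K.
    apply/seteqP; split => x /=.
      case: pselect => [_ []/eqP//|nK [/eqP]]; rewrite eqSS => /eqP -> _; by split.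
    move=> [cm nK]; case: pselect => [/nK//|_]; split; first by rewrite cm.
    by case.
  exact: hc.
move=> x y Axy nx ny /=.
case: (pselect (K x)) => Kx; case: (pselect (K y)) => Ky //.
- move=> _; apply: (hKB x y Kx Ky _ _ Axy).
  + by apply: contrapT => h; apply: nx.
  + by apply: contrapT => h; apply: ny.
- by move=> [] /(hA x y Axy Kx Ky).
Qed.

Lemma good_bigcap (X : topologicalType) (d : X -> X -> RR) (A : set (X * X))
    (F : nat -> set X) :
  is_metric d -> metric_compatible d -> (forall k, good A (F k)) ->
  good A (\bigcap_k F k).
Proof.
move=> md cd hF; split.
  by apply: closed_bigI => k _; case: (hF k).
have [cc hcc] := choice (fun k => proj2 (hF k)).
have hkm : forall x, exists k, (\bigcap_k F k) x \/
    (~ F k x /\ forall l, (l < k)%N -> F l x).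
  move=> x; have [Kx|nKx] := pselect ((\bigcap_k F k) x).
    by exists 0%N; left.
  have [k [nFk hk]] : exists k, ~ F k x /\ forall m, (m < k)%N -> ~ ~ F m x.
    apply: least_ex; apply: contrapT => h; apply: nKx => k _.
    by apply: contrapT => nF; apply: h; exists k.
  exists k; right; split => // l lk; exact: contrapT (hk l lk).
have [km hkm'] := choice hkm.
exists (fun x => pickle (km x, cc (km x) x)); split.
  move=> m.
  case E : (pickle_inv m : option (nat * nat)) => [[k n]|].
    have -> : (fun x => pickle (km x, cc (km x) x)) @^-1` [set m] `\` \bigcap_k F k
      = (cc k @^-1` [set n] `\` F k) `&` \bigcap_(l in [set l | (l < k)%N]) F l.
      apply/seteqP; split => x /=.
        move=> [hm nK].
        have := pickleK_inv (km x, cc (km x) x); rewrite hm E => -[ek en].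
        case: (hkm' x) => // -[nF hl].
        subst k n; split; [split|] => // l lk; exact: hl.
      move=> [[hn nF] hl].
      have nK : ~ (\bigcap_k F k) x by move=> h; apply: nF; apply: h.
      have ekm : km x = k.
        case: (hkm' x) => // -[nF' hl'].
        case: (ltngtP (km x) k) => // [lt|gt].
          by exfalso; apply: nF'; apply: hl.
        by exfalso; apply: nF; apply: hl'.
      split => //; rewrite ekm hn.
      by have := @pickle_invK (nat * nat)%type m; rewrite E.
    apply: (D02_closedI md cd); first by case: (hcc k) => + _; apply.
    by apply: closed_bigI => l _; case: (hF l).
  have -> : (fun x => pickle (km x, cc (km x) x)) @^-1` [set m] `\` \bigcap_k F k
    = set0.
    apply/seteqP; split => x //= [hm _].
    by have := pickleK_inv (km x, cc (km x) x); rewrite hm E.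
  exact: D02_set0.
move=> x y Axy nx ny /= /(pcan_inj pickleK) [ek ec].
case: (hkm' x) => // -[nFx _]; case: (hkm' y) => // -[nFy _].
have := (proj2 (hcc (km x))) x y Axy nFx; rewrite ek; move=> /(_ nFy).
by rewrite -ec ek.
Qed.

From mathcomp Require Import zify.

Definition hf (n : nat) : RR := ((2 ^ n)%N%:R)^-1.

Lemma hf_gt0 n : 0 < hf n.
Proof. by rewrite /hf invr_gt0 ltr0n expn_gt0. Qed.

Lemma hfS n : hf n.+1 + hf n.+1 = hf n.
Proof.
rewrite /hf expnS natrM.
have h : ((2 ^ n)%N%:R : RR) != 0 by rewrite pnatr_eq0 -lt0n expn_gt0.
by field.
Qed.

Lemma hf_anti m n : (m <= n)%N -> hf n <= hf m.
Proof.
move=> mn; rewrite /hf lef_pV2 ?posrE ?ltr0n ?expn_gt0 // ler_nat.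
exact: leq_pexp2l.
Qed.

Lemma hf_small (e : RR) : 0 < e -> exists N, hf N < e.
Proof.
move=> e0; have [N hN] := archi_inv e0; exists N.
apply: le_lt_trans hN; rewrite /hf /rad lef_pV2 ?posrE ?ltr0n ?expn_gt0 // ler_nat.
exact: ltn_expl.
Qed.

Fixpoint wseq (T : Type) (x0 : T) (st : nat -> T -> T) (n : nat) : T :=
  match n with 0%N => x0 | n'.+1 => st n' (wseq x0 st n') end.

Lemma nbhs_cont (XX X : topologicalType) (f : XX -> X) :
  (forall x U, open U -> U (f x) -> exists V, nbhs x V /\ forall y, V y -> U (f y)) ->
  continuous f.
Proof.
move=> H x U. rewrite nbhsE => -[B [oB Bfx] BU].
have [V [nV HV]] := H x B oB Bfx.
by apply: filterS nV => y /HV /BU.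
Qed.

Lemma part_b (XX X : topologicalType) (C : bool -> nat -> set XX) (A : set (X * X))
    (d : X -> X -> RR) (K : set X) x0 :
  is_metric d -> metric_compatible d -> metric_complete d -> comparing C -> K x0 ->
  (forall z, K z -> forall e, 0 < e -> exists a b,
      K a /\ K b /\ d z a < e /\ d z b < e /\ A (a, b)) ->
  exists f : XX -> X, continuous f /\
    (forall i x y, C false i x -> C true i y -> A (f x, f y)).
Proof.
move=> md cd cc comp Kx0 PK.
have [d0 dE dC dT] := md.
have d00 : forall z, d z z = 0 by move=> z; apply/dE.
have [Op hO] := choice comp.
have [p hp] : {p : nat * XX -> nat & forall qx, Op qx.1 (p qx) qx.2}.
  apply: (choice (P := fun qx pp => Op qx.1 pp qx.2)) => -[q x]; have [[_ _ E] _] := hO q.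
  have : [set: XX] x by [].
  by rewrite -E => -[pp _ Opp]; exists pp.
pose pf q x := p (q, x).
have pf_spec : forall q x, Op q (pf q x) x by move=> q x; exact: (hp (q, x)).
have pf_uniq : forall q x pp, Op q pp x -> pf q x = pp.
  move=> q x pp Opp; apply: contrapT => ne.
  have [[_ hdis _] _] := hO q.
  have := hdis _ _ ne; move/seteqP => [+ _] => /(_ x) h.
  by apply: (h (conj (pf_spec q x) Opp)).
have [pk hpk] : {pk : X * nat -> X * X & forall zn,
  K zn.1 -> [/\ K (pk zn).1, K (pk zn).2, d zn.1 (pk zn).1 < hf zn.2.+1,
                d zn.1 (pk zn).2 < hf zn.2.+1 & A (pk zn)]}.
  apply: (choice (P := fun zn ab => K zn.1 -> [/\ K ab.1, K ab.2, d zn.1 ab.1 < hf zn.2.+1,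
                d zn.1 ab.2 < hf zn.2.+1 & A ab])).
  move=> [z n] /=; have [Kz|nKz] := pselect (K z).
    have [a [b [Ka [Kb [da [db Aab]]]]]] := PK z Kz _ (hf_gt0 n.+1).
    by exists (a, b).
  by exists (z, z).
pose step (n pp : nat) (z : X) :=
  if pp == (2 * n)%N then (pk (z, n)).1
  else if pp == (2 * n).+1 then (pk (z, n)).2 else z.
pose w (x : XX) := wseq x0 (fun n z => step n (pf n x) z).
have stepK : forall n pp z, K z -> K (step n pp z) /\ d z (step n pp z) < hf n.+1.
  move=> n pp z Kz; have [Ka Kb da db _] := hpk (z, n) Kz.
  rewrite /step; case: ifP => _ //; case: ifP => _ //.
  by split => //; rewrite d00; exact: hf_gt0.
have wK : forall x n, K (w x n) by move=> x; elim => //= n IH; case: (stepK n (pf n x) _ IH).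
have wd : forall x n, d (w x n) (w x n.+1) < hf n.+1.
  by move=> x n; case: (stepK n (pf n x) _ (wK x n)).
have wC : forall x n j, d (w x n) (w x (n + j)%N) <= hf n - hf (n + j)%N.
  move=> x n; elim=> [|j IH]; first by rewrite addn0 d00 subrr.
  have := dT (w x n) (w x (n + j)%N) (w x (n + j)%N.+1).
  have := wd x (n + j)%N; have := hfS (n + j)%N.
  rewrite addnS; lra.
have wC' : forall x n j, d (w x n) (w x (n + j)%N) < hf n.
  move=> x n j; have := wC x n j; have := hf_gt0 (n + j)%N; lra.
have [f hf_] : {f : XX -> X & forall x, w x @ \oo --> f x}.
  apply: (choice (P := fun x l => w x @ \oo --> l)) => x; apply: cc => e e0.
  have [N hN] : exists N, hf N < e / 2 by apply: hf_small; lra.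
  exists N => m n Nm Nn.
  have := wC' x N (m - N)%N; have := wC' x N (n - N)%N.
  rewrite !subnKC // => h1 h2.
  have := dT (w x m) (w x N) (w x n); rewrite (dC (w x m) (w x N)); lra.
have fd : forall x n, d (w x n) (f x) < hf n + hf n.
  move=> x n; have [N hN] := metric_cvg md cd (hf_ x) (hf_gt0 n).
  have := hN (n + N)%N (leq_addl _ _); have := wC' x n N.
  have := dT (w x n) (w x (n + N)%N) (f x); rewrite (dC (w x (n + N)%N)); lra.
have wagree : forall x y n, (forall q, (q < n)%N -> pf q y = pf q x) -> w y n = w x n.
  move=> x y; elim => // n IH h; rewrite /w /= -/(w y n) -/(w x n).
  rewrite IH; last by move=> q qn; apply: h; apply: ltnW.
  by rewrite h.
exists f; split.
  apply: nbhs_cont => x U oU Ufx.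
  have [e e0 he] := (cd U).1 oU (f x) Ufx.
  have [n hn] : exists n, hf n < e / 4 by apply: hf_small; lra.
  exists [set y | forall q, (q < n)%N -> pf q y = pf q x]; split.
    elim: (n) => [|k IH].
      by apply: filterS filterT => y _ q.
    have nO : nbhs x (Op k (pf k x)).
      apply: open_nbhs_nbhs; split; last exact: pf_spec.
      by have [[hcl _ _] _] := hO k; case: (hcl (pf k x)).
    apply: filterS (filterI IH nO) => y [h1 h2] q; rewrite ltnS leq_eqVlt.
    case/orP => [/eqP ->|]; last exact: h1.
    exact: pf_uniq.
  move=> y hy; apply: he => /=.
  have := fd x n; have := fd y n; rewrite (wagree x y n hy).
  have := dT (f x) (w x n) (f y); rewrite (dC (f x) (w x n)); lra.
move=> i x y Cx Cy.
have lt_i : forall q, (q < i)%N -> pf q y = pf q x.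
  move=> q qi; have [_ h] := hO q; have [hlt _] := h i; have [P hP] := hlt qi.
  rewrite (pf_uniq q x P); last by apply: hP; left.
  by apply: pf_uniq; apply: hP; right.
have ge_x : forall q, (i <= q)%N -> pf q x = (2 * i)%N.
  move=> q iq; have [_ h] := hO q; have [_ h2] := h i.
  by apply: pf_uniq; have := h2 iq false x Cx; rewrite addn0.
have ge_y : forall q, (i <= q)%N -> pf q y = (2 * i).+1.
  move=> q iq; have [_ h] := hO q; have [_ h2] := h i.
  by apply: pf_uniq; have := h2 iq true y Cy; rewrite addn1.
have wS : forall x n, w x n.+1 = step n (pf n x) (w x n) by [].
set z := w x i.
have ezy : w y i = z by rewrite /z; apply: wagree.
have wx : forall j, w x (i.+1 + j)%N = (pk (z, i)).1.
  elim=> [|j IH].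
    by rewrite addn0 wS /step ge_x // eqxx.
  rewrite addnS wS IH /step ge_x; last by lia.
  have -> : ((2 * i)%N == (2 * (i.+1 + j))%N) = false by apply/negbTE/eqP; lia.
  have -> : ((2 * i)%N == (2 * (i.+1 + j)%N).+1) = false by apply/negbTE/eqP; lia.
  by [].
have wy : forall j, w y (i.+1 + j)%N = (pk (z, i)).2.
  elim=> [|j IH].
    rewrite addn0 wS /step ge_y // ezy.
    have -> : ((2 * i).+1 == (2 * i)%N) = false by apply/negbTE/eqP; lia.
    by rewrite eqxx.
  rewrite addnS wS IH /step ge_y; last by lia.
  have -> : ((2 * i).+1 == (2 * (i.+1 + j))%N) = false by apply/negbTE/eqP; lia.
  have -> : ((2 * i).+1 == (2 * (i.+1 + j)%N).+1) = false by apply/negbTE/eqP; lia.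
  by [].
have lim_eq : forall (v : nat -> X) a l, (forall j, v (i.+1 + j)%N = a) ->
    (forall n, d (v n) l < hf n + hf n) -> a = l.
  move=> v a l hv hl; apply/dE; apply: contrapT => ne.
  have dpos : 0 < d a l by rewrite lt_def; apply/andP; split; [apply/eqP|].
  have [N hN] : exists N, hf N < d a l / 2 by apply: hf_small; lra.
  have := hl (i.+1 + N)%N; rewrite hv.
  have := hf_anti (leq_addl i.+1 N); lra.
have [_ _ _ _ Aab] := hpk (z, i) (wK x i).
rewrite -(lim_eq _ _ _ wx (fd x)) -(lim_eq _ _ _ wy (fd y)).
by case: (pk (z, i)) Aab.
Qed.

Unset Implicit Arguments.

Theorem lemma4p4 (XX : topologicalType) (C : bool -> nat -> set XX)
  (X : topologicalType) (A : set (X * X)) :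
  zero_dim XX -> polish XX -> comparing C -> one_disjoint C ->
  polish X ->
  (exists c : X -> nat,
      (forall n : nat, Delta02 (c @^-1` [set n])) /\
      (forall x y : X, A (x, y) -> c x <> c y))
  \/
  (exists f : XX -> X,
      continuous f /\
      (forall (i : nat) (x y : XX), C false i x -> C true i y -> A (f x, f y))).
Proof.
move=> _ _ comp _ [[D [cD dD]] [d [md cd cc]]].
have [d0 dE dC dT] := md.
have [g hg] := countable_injP _ cD.
pose Bk (k : nat) : set X := match (pickle_inv k : option (nat * nat)) with
  | Some (j, m) => [set z | exists y, D y /\ g y = j /\ d y z < rad m]
  | None => set0 end.
have Bk_open : forall k, open (Bk k).
  move=> k; rewrite /Bk; case: (pickle_inv k : option (nat * nat)) => [[j m]|];
    last exact: open0.
  apply/cd => z [y [Dy [gy hy]]].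
  exists (rad m - d y z); first by rewrite subr_gt0.
  move=> z' /= hz'; exists y; split => //; split => //; have := dT y z z'; lra.
have Bk_base : forall z (e : RR), 0 < e -> exists k, Bk k z /\ Bk k `<=` [set w | d z w < e].
  move=> z e e0.
  have [m hm] : exists m, rad m < e / 2 by apply: archi_inv; lra.
  have [y [hy Dy]] : ([set w | d z w < rad m] `&` D) !=set0.
    apply: dD; last exact: ball_open.
    by exists z => /=; rewrite (proj2 (dE z z) erefl); exact: rad_gt0.
  exists (pickle (g y, m)); rewrite /Bk pickleK_inv; split.
    by exists y; split => //; split => //; rewrite dC.
  move=> z' [y' [Dy' [gy' hy']]].
  have eyy : y' = y by apply: hg; rewrite ?in_setE.
  subst y'; have hy2 : d z y < rad m := hy; have := dT z y z'; rewrite /mkset; lra.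
have [Fk hFk] : {Fk : nat -> set X & forall k, good A (Fk k) /\
    ((exists G, good A G /\ Bk k `<=` ~` G) -> Bk k `<=` ~` Fk k)}.
  apply: (choice (P := fun k F => good A F /\
    ((exists G, good A G /\ Bk k `<=` ~` G) -> Bk k `<=` ~` F))) => k.
  have [[G [gG hG]]|nG] := pselect (exists G, good A G /\ Bk k `<=` ~` G).
    by exists G; split.
  exists setT; split; first exact: good_setT.
  by move=> h; exfalso; apply: nG.
pose K := \bigcap_k Fk k.
have gK : good A K by apply: (good_bigcap md cd) => k; case: (hFk k).
have PK : forall z, K z -> forall e, 0 < e -> exists a b,
      K a /\ K b /\ d z a < e /\ d z b < e /\ A (a, b).
  move=> z Kz e e0; apply: contrapT => hno.
  have [k [Bz Bsub]] := Bk_base z e e0.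
  have gG : good A (K `\` Bk k).
    apply: (good_remove md cd gK (Bk_open k)) => x y Kx Ky Bx By Axy.
    apply: hno; exists x, y; split => //; split => //; split; first exact: Bsub.
    by split => //; exact: Bsub.
  have := (proj2 (hFk k)); move=> /(_ (ex_intro _ _ (conj gG _))) h.
  have : Bk k `<=` ~` (K `\` Bk k) by move=> w Bw [_]; apply.
  move=> /h /(_ z Bz); apply; exact: Kz.
have [[x0 Kx0]|nK] := pselect (exists x0, K x0).
  right; exact: (part_b md cd cc comp Kx0 PK).
left; have [_ [c [hc hA]]] := gK.
exists c; split.
  move=> n; have := hc n.
  have -> // : c @^-1` [set n] `\` K = c @^-1` [set n].
  apply/seteqP; split => x; first by case.
  by move=> h; split => // Kx; apply: nK; exists x.
move=> x y Axy; apply: hA => // Kx; apply: nK; [exists x|exists y]; done.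
Qed.
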